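(* Let $(a_n),(b_n),(c_n),(\delta_n),(\xi_n)$ be sequences of real numbers such that $a_n,b_n,c_n,\xi_n\ge0$ for all $n$; $\lim_{n\to\infty}a_n=0$; $\sum_n b_n<\infty$; $\sum_n c_n=\infty$; the series $\sum_n\delta_n$ converges; and there exists $N_0$ such that for all $n>N_0$, $$\xi_{n+1}\le\max\big(a_n,\,(1+b_n)\xi_n+\delta_n-c_n\big).$$ Then $\lim_{n\to\infty}\xi_n=0$. *)

(* Defs.v *)
From Stdlib Require Import Reals.
From Coquelicot Require Export Coquelicot.

(* Main.v *)
Require Import Defs.
From Stdlib Require Import Reals Lra Lia Psatz.
From Coquelicot Require Import Coquelicot.
Open Scope R_scope.

Fixpoint ps (f : nat -> R) (n : nat) : R :=
  match n with O => 0 | S k => ps f k + f k end.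

Lemma ps_sum f n : ps f (S n) = sum_n f n.
Proof.
  induction n.
  - simpl. rewrite sum_O. lra.
  - change (ps f (S (S n))) with (ps f (S n) + f (S n)).
    rewrite IHn, sum_Sn. reflexivity.
Qed.

Lemma ps_mono f j n : (forall k, 0 <= f k) -> (j <= n)%nat -> ps f j <= ps f n.
Proof.
  intros Hf H. induction H. lra. simpl. specialize (Hf m). lra.
Qed.

Lemma ps_lin (M : R) (b d c : nat -> R) n :
  ps (fun k => M * b k + d k - c k) n = M * ps b n + ps d n - ps c n.
Proof. induction n; simpl. ring. rewrite IHn. ring. Qed.

Lemma ps_lin0 (M : R) (b d : nat -> R) n :
  ps (fun k => M * b k + d k - 0 * b k) n = M * ps b n + ps d n.
Proof. induction n; simpl. ring. rewrite IHn. ring. Qed.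

Lemma cauchy_ps f : ex_series f -> forall eps, 0 < eps ->
  exists N, forall j n, (N <= j)%nat -> (N <= n)%nat -> Rabs (ps f n - ps f j) <= eps.
Proof.
  intros [l Hl] eps He.
  assert (Hl2 : is_lim_seq (sum_n f) l) by exact Hl.
  apply is_lim_seq_spec in Hl2. rename Hl2 into Hl0. clear Hl. rename Hl0 into Hl.
  assert (He2 : 0 < eps / 2) by lra.
  destruct (Hl (mkposreal _ He2)) as [N HN]. simpl in HN.
  exists (S N). intros j n Hj Hn.
  destruct j as [|j]; [lia|]. destruct n as [|n]; [lia|].
  rewrite !ps_sum.
  assert (A1 := HN j ltac:(lia)). assert (A2 := HN n ltac:(lia)).
  assert (G: forall x y z: R, Rabs (x - z) < eps/2 -> Rabs (y - z) < eps/2 -> Rabs (y - x) <= eps).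
  { intros x y z U V. apply Rabs_lt_between in U. apply Rabs_lt_between in V. apply Rabs_le_between. split; lra. }
  exact (G _ _ _ A1 A2).
Qed.

Lemma inv_lemma (u e : nat -> R) (A : R) (N : nat) :
 (forall n, (N <= n)%nat ->
   ((u n <= u N + (ps e n - ps e N)) \/
    exists j, (N < j <= n)%nat /\ u n <= A + (ps e n - ps e j)) ->
   (u (S n) <= A \/ u (S n) <= u n + e n)) ->
 forall n, (N <= n)%nat ->
   (u n <= u N + (ps e n - ps e N)) \/
   exists j, (N < j <= n)%nat /\ u n <= A + (ps e n - ps e j).
Proof.
  intros Hs n. induction n as [|n IH]; intros Hn.
  - left. assert (N = 0%nat) by lia. subst. lra.
  - destruct (Nat.eq_dec N (S n)) as [E|E].
    + left. subst. lra.
    + assert (Hn' : (N <= n)%nat) by lia.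
      specialize (IH Hn'). destruct (Hs n Hn' IH) as [H1|H1].
      * right. exists (S n). split. lia. lra.
      * simpl ps. destruct IH as [H2|[j [Hj H2]]].
        -- left. lra.
        -- right. exists j. split. lia. lra.
Qed.

Theorem mainTheorem4 (a b c delta xi : nat -> R) :
  (forall n, 0 <= a n) -> (forall n, 0 <= b n) ->
  (forall n, 0 <= c n) -> (forall n, 0 <= xi n) ->
  is_lim_seq a 0 ->
  ex_series b ->
  is_lim_seq (sum_n c) p_infty ->
  ex_series delta ->
  (exists N0 : nat, forall n : nat, (N0 < n)%nat ->
     xi (S n) <= Rmax (a n) ((1 + b n) * xi n + delta n - c n)) ->
  is_lim_seq xi 0.
Proof.
  intros Ha Hb Hc Hxi La Sb Lc Sd [N0 HN0].
  apply is_lim_seq_spec in La. apply is_lim_seq_spec in Lc.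
  assert (aev : forall eps, 0 < eps -> exists N, forall n, (N <= n)%nat -> a n <= eps).
  { intros eps He. destruct (La (mkposreal _ He)) as [N HN]. exists N.
    intros n Hn. specialize (HN n Hn). simpl in HN.
    rewrite Rminus_0_r, Rabs_pos_eq in HN; auto. lra. }
  destruct (aev 1 ltac:(lra)) as [Na HNa].
  destruct (cauchy_ps _ Sd 1 ltac:(lra)) as [Nd HNd].
  destruct (cauchy_ps _ Sb (1/2) ltac:(lra)) as [Nb HNb].
  set (N1 := (S N0 + Na + Nd + Nb)%nat).
  set (C := Rmax 1 (xi N1)).
  set (M := 2 * C + 2).
  assert (HC1 : 1 <= C) by apply Rmax_l.
  assert (HC2 : xi N1 <= C) by apply Rmax_r.
  set (e := fun k => M * b k + delta k - 0 * b k).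
  assert (bound_of_inv : forall n, (N1 <= n)%nat ->
     ((xi n <= xi N1 + (ps e n - ps e N1)) \/
      exists j, (N1 < j <= n)%nat /\ xi n <= 1 + (ps e n - ps e j)) -> xi n <= M).
  { intros n Hn H. unfold e in H. repeat rewrite ps_lin0 in H.
    destruct H as [H|[j [Hj H]]].
    - assert (B1 := HNb N1 n ltac:(unfold N1; lia) ltac:(unfold N1; lia)).
      assert (B2 := HNd N1 n ltac:(unfold N1; lia) ltac:(unfold N1; lia)).
      apply Rabs_le_between in B1. apply Rabs_le_between in B2.
      assert (0 <= C) by lra.
      assert (M * (ps b n - ps b N1) <= M * (1/2)) by (apply Rmult_le_compat_l; unfold M; lra).
      try rewrite (ps_lin0 M b delta N1) in H. unfold M in *. lra.
    - assert (B1 := HNb j n ltac:(unfold N1 in *; lia) ltac:(unfold N1; lia)).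
      assert (B2 := HNd j n ltac:(unfold N1 in *; lia) ltac:(unfold N1; lia)).
      apply Rabs_le_between in B1. apply Rabs_le_between in B2.
      assert (0 <= C) by lra.
      assert (M * (ps b n - ps b j) <= M * (1/2)) by (apply Rmult_le_compat_l; unfold M; lra).
      rewrite (ps_lin0 M b delta j) in H. unfold M in *. lra. }
  assert (Inv := inv_lemma xi e 1 N1).
  assert (Bnd : forall n, (N1 <= n)%nat -> xi n <= M).
  { intros n Hn. apply bound_of_inv; auto. apply Inv; auto.
    intros m Hm Hinv. assert (Hxm := bound_of_inv m Hm Hinv).
    assert (H := HN0 m ltac:(unfold N1 in *; lia)).
    unfold Rmax in H. destruct Rle_dec.
    - right. unfold e. assert (0 <= b m * xi m) by (apply Rmult_le_pos; auto).
      assert (b m * xi m <= b m * M) by (apply Rmult_le_compat_l; auto).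
      specialize (Hc m). nra.
    - left. assert (Ham := HNa m ltac:(unfold N1 in *; lia)). lra. }
  assert (HM : 2 <= M) by (unfold M; lra).
  apply is_lim_seq_spec. intros [eps Heps]. simpl.
  set (ep := eps / 3).
  assert (Hep : 0 < ep) by (unfold ep; lra).
  destruct (aev ep Hep) as [Na2 HNa2].
  destruct (cauchy_ps _ Sd (ep/2) ltac:(lra)) as [Nd2 HNd2].
  destruct (cauchy_ps _ Sb (ep/(2*M)) ltac:(apply Rdiv_lt_0_compat; lra)) as [Nb2 HNb2].
  set (N := (N1 + Na2 + Nd2 + Nb2)%nat).
  set (e2 := fun k => M * b k + delta k - c k).
  assert (Inv2 := inv_lemma xi e2 ep N).
  assert (Step : forall n, (N <= n)%nat -> xi (S n) <= ep \/ xi (S n) <= xi n + e2 n).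
  { intros m Hm. assert (Hxm := Bnd m ltac:(unfold N in *; lia)).
    assert (H := HN0 m ltac:(unfold N, N1 in *; lia)).
    unfold Rmax in H. destruct Rle_dec.
    - right. unfold e2. assert (0 <= b m * xi m) by (apply Rmult_le_pos; auto).
      assert (b m * xi m <= b m * M) by (apply Rmult_le_compat_l; auto).
      nra.
    - left. assert (Ham := HNa2 m ltac:(unfold N in *; lia)). lra. }
  assert (KeyB : forall j n, (N <= j)%nat -> (j <= n)%nat ->
     ps e2 n - ps e2 j <= ep - (ps c n - ps c j)).
  { intros j n Hj Hn. unfold e2. repeat rewrite ps_lin.
    assert (B1 := HNb2 j n ltac:(unfold N in *; lia) ltac:(unfold N in *; lia)).
    assert (B2 := HNd2 j n ltac:(unfold N in *; lia) ltac:(unfold N in *; lia)).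
    apply Rabs_le_between in B1. apply Rabs_le_between in B2.
    assert (M * (ep / (2 * M)) = ep / 2) by (field; lra).
    assert (M * (ps b n - ps b j) <= M * (ep / (2 * M))) by (apply Rmult_le_compat_l; lra).
    lra. }
  destruct (Lc (ps c N + xi N + ep)) as [Nc HNc].
  exists (S (N + Nc)). intros n Hn.
  rewrite Rminus_0_r, Rabs_pos_eq; auto.
  assert (Hcn : ps c N + xi N + ep < ps c n).
  { destruct n as [|n]; [lia|]. rewrite ps_sum. apply HNc. lia. }
  destruct (Inv2 (fun m Hm _ => Step m Hm) n ltac:(lia)) as [H|[j [Hj H]]].
  - assert (K := KeyB N n (le_n _) ltac:(lia)). unfold ep in *. lra.
  - assert (K := KeyB j n ltac:(lia) ltac:(lia)).
    assert (ps c j <= ps c n) by (apply ps_mono; auto; lia).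
    unfold ep in *. lra.
Qed.
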